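(* The intersection of all members' viability kernels is not necessarily a viable set for all members. Precisely: there exist $N\ge 2$, a closed constraint set $K\subset\mathbb R^n$, an admissible control set $U$ and continuous-time dynamics $x'=f_i(x,u)$, $u\in U$, $i=1,\dots,N$, such that the intersection $H=\bigcap_{i=1}^N \mathrm{Viab}_i(K)$ is nonempty but $H$ is not a viable set for some member $i$'s system.
   Context: $\mathrm{Viab}_i(K)$ denotes the viability kernel of $K$ for member $i$'s system $x'(t)=f_i(x(t),u(t))$, $u(t)\in U(x(t))$: the set of all $x\in K$ from which there exists an evolution of the system starting at $x$ whose trajectory remains in $K$ for all $t\ge0$. A set $H$ is viable for a system if from every $x\in H$ there exists an evolution of that system starting at $x$ remaining in $H$ for all $t\ge0$. *)

(* Defs.v *)
From HB Require Import structures.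
From mathcomp Require Import all_boot all_order all_algebra.
From mathcomp Require Import all_classical all_reals all_analysis.
Set Implicit Arguments. Unset Strict Implicit. Unset Printing Implicit Defensive.
Import Order.TTheory GRing.Theory Num.Theory.
Import numFieldNormedType.Exports.
Local Open Scope classical_set_scope.
Local Open Scope ring_scope.

Section Viability.
Variables (R : realType) (n m : nat).
Notation X := 'rV[R]_n.
Notation Uc := 'rV[R]_m.

Definition evolution (f : X -> Uc -> X) (U : X -> set Uc) (x0 : X)
  (x : R -> X) : Prop :=
  x 0 = x0 /\
  exists u : R -> Uc, forall t : R, 0 <= t ->
    U (x t) (u t) /\ is_derive t 1 x (f (x t) (u t)).

Definition viab (f : X -> Uc -> X) (U : X -> set Uc) (K : set X) : set X :=
  [set x0 | K x0 /\ exists x, evolution f U x0 x /\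
                       forall t : R, 0 <= t -> K (x t)].

Definition viable (f : X -> Uc -> X) (U : X -> set Uc) (H : set X) : Prop :=
  forall x0, H x0 -> exists x, evolution f U x0 x /\
                       forall t : R, 0 <= t -> H (x t).
End Viability.

(* Main.v *)
Require Import Defs.
From HB Require Import structures.
From mathcomp Require Import all_boot all_order all_algebra.
From mathcomp Require Import all_classical all_reals all_analysis.
Import Order.TTheory GRing.Theory Num.Theory.
Import numFieldNormedType.Exports.
From mathcomp Require Import lra.
Local Open Scope classical_set_scope.
Local Open Scope ring_scope.

Lemma comp_derive (R : realType) n (x : R -> 'rV[R]_n) (v : 'rV[R]_n) (s : R) (j : 'I_n) :
  is_derive s (1:R) x v -> is_derive s (1:R) (fun r => x r ord0 j) (v ord0 j).
Proof.
move=> [dx Dx].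
have dj := (derivable_mxP x s 1).1 dx ord0 j.
apply: DeriveDef => //.
by move: Dx; rewrite derive_mx // => <-; rewrite mxE.
Qed.

Lemma affine_traj (R : realType) n (x : R -> 'rV[R]_n) (v : 'rV[R]_n) :
  (forall t : R, 0 <= t -> is_derive t (1:R) x v) ->
  forall (t : R) (j : 'I_n), 0 <= t -> x t ord0 j = x 0 ord0 j + t * v ord0 j.
Proof.
move=> hd t j t0.
have hg (s : R) : 0 <= s -> is_derive s (1:R) (fun r => x r ord0 j) (v ord0 j).
  by move=> s0; apply: comp_derive; exact: hd.
have hd' : forall s, s \in `]0, t[ -> is_derive s (1:R) (fun r => x r ord0 j) (v ord0 j).
  by move=> s; rewrite in_itv /= => /andP[h _]; apply: hg; exact: ltW.
have hc : {within `[0, t], continuous (fun r => x r ord0 j)}.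
  apply: continuous_in_subspaceT => s hs.
  apply/differentiable_continuous/derivable1_diffP.
  move: hs => /set_mem; rewrite /= in_itv /= => /andP[h _].
  by have [] := hg s h.
have [c _ E] := @MVT_segment R (fun r => x r ord0 j) (fun _ => v ord0 j) 0 t t0 hd' hc.
by move/eqP: E; rewrite subr0 subr_eq => /eqP ->; rewrite addrC mulrC.
Qed.
Lemma lin_derive (R : realType) n (p v : 'rV[R]_n) (t : R) :
  is_derive t (1:R) (fun s : R => p + s *: v) v.
Proof.
have h : is_derive t (1:R) (fun s : R => s *: v) v.
  have dd : differentiable ( *:%R ^~ v : R -> 'rV[R]_n) t.
    by apply: ex_diff.
  apply: DeriveDef; first exact/derivable1_diffP.
  by rewrite deriveE // diff_val scale1r.
have := @is_deriveD _ _ _ (cst p) (fun s : R => s *: v) t 1 0 v _ h.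
by rewrite add0r; apply.
Qed.

Definition ev (R : realType) (i : 'I_2) : 'rV[R]_2 :=
  \row_(j < 2) ((nat_of_ord j == nat_of_ord i)%:R : R).

Lemma evE (R : realType) (i j : 'I_2) :
  ev R i ord0 j = ((nat_of_ord j == nat_of_ord i)%:R : R).
Proof. by rewrite mxE. Qed.

Theorem proposition2 (R : realType) :
  exists (N n m : nat) (K : set 'rV[R]_n) (U : 'rV[R]_n -> set 'rV[R]_m)
         (f : 'I_N -> 'rV[R]_n -> 'rV[R]_m -> 'rV[R]_n),
    (2 <= N)%N /\ closed K /\
    (forall i, continuous (fun p : 'rV[R]_n * 'rV[R]_m => f i p.1 p.2)) /\
    let H := [set x | forall i : 'I_N, viab (f i) U K x] in
    H !=set0 /\ exists i : 'I_N, ~ viable (f i) U H.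
Proof.
pose K : set 'rV[R]_2 :=
  [set p | p ord0 ord_max <= 1] `|` [set p | p ord0 ord0 <= 0].
pose U : 'rV[R]_2 -> set 'rV[R]_1 := fun _ => setT.
pose f : 'I_2 -> 'rV[R]_2 -> 'rV[R]_1 -> 'rV[R]_2 := fun i _ _ => ev R i.
have traj i p : evolution (f i) U p (fun s => p + s *: ev R i).
  split; first by rewrite scale0r addr0.
  by exists (fun _ => 0) => t _; split => //; exact: lin_derive.
have aff i p x : evolution (f i) U p x -> forall t j, 0 <= t ->
    x t ord0 j = p ord0 j + t * ((nat_of_ord j == nat_of_ord i)%:R : R).
  move=> [x0 [u hu]] t j t0; rewrite -evE -x0.
  by apply: affine_traj => // s s0; have [] := hu s s0.
exists 2%N, 2%N, 1%N, K, U, f.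
split => //; split.
  apply: closedU.
    apply: (@preimage_closed _ _ (fun p : 'rV[R]_2 => p ord0 ord_max) [set x | x <= 1]).
      by move=> q _; exact: coord_continuous.
    exact: closed_le.
  apply: (@preimage_closed _ _ (fun p : 'rV[R]_2 => p ord0 ord0) [set x | x <= 0]).
    by move=> q _; exact: coord_continuous.
  exact: closed_le.
split; first by move=> i; exact: cst_continuous.
move=> H; split.
  exists 0 => i; split; first by left; rewrite /= mxE.
  exists (fun s => 0 + s *: ev R i); split; first exact: traj.
  move=> t t0; case: i => -[|[|//]] ip.
    by left; rewrite /= !mxE /= mulr0 add0r.
  by right; rewrite /= !mxE /= mulr0 add0r.
exists ord_max => hv.
have H0 : H 0.
  move=> i; split; first by left; rewrite /= mxE.
  exists (fun s => 0 + s *: ev R i); split; first exact: traj.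
  move=> t t0; case: i => -[|[|//]] ip.
    by left; rewrite /= !mxE /= mulr0 add0r.
  by right; rewrite /= !mxE /= mulr0 add0r.
have [x [ex hx]] := hv 0 H0.
have t2 : (0:R) <= 2 by [].
have [_ [y [ey hy]]] := hx 2 t2 ord0.
have t1 : (0:R) <= 1 by [].
have := hy 1 t1.
rewrite /K /= (aff _ _ _ ey 1 ord0 t1) (aff _ _ _ ey 1 ord_max t1).
rewrite (aff _ _ _ ex 2 ord0 t2) (aff _ _ _ ex 2 ord_max t2) /= !mxE /=.
rewrite !mulr0 !mulr1 !add0r !addr0.
by case=> h; lra.
Qed.
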